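(* Let $N\ge 1$ be an integer and $a\neq 0$ a complex constant. Let $\big(z_1(\ell),\dots,z_N(\ell)\big)$, $\ell=0,1,2,\dots$, be a sequence of $N$-tuples of complex numbers evolving according to the following discrete-time rule: for every $\ell\ge 0$, the numbers $z_1(\ell+2),\dots,z_N(\ell+2)$ are (in some order, counted with multiplicity) the $N$ roots in $z$ of $$\prod_{j=1}^{N}\frac{z-a^{2}z_j(\ell)}{z-a\,z_j(\ell+1)}=1+a,$$ i.e. of the degree-$N$ polynomial equation $\prod_{j=1}^N\big(z-a^2z_j(\ell)\big)-(1+a)\prod_{j=1}^N\big(z-a z_j(\ell+1)\big)=0$. Define $$v_m(0)=\frac{\prod_{j=1}^{N}\big(z_j(1)-a\,z_m(0)\big)}{\prod_{j=1,\,j\neq m}^{N}\big[a\,\big(z_j(0)-z_m(0)\big)\big]},\qquad m=1,\dots,N,$$ and the $N\times N$ matrix $$U_{nm}(\ell)=\delta_{nm}\,z_n(0)\,a^{\ell}+v_m(0)\,\frac{a^{\ell}-1}{a-1},\qquad n,m=1,\dots,N,$$ where $\frac{a^\ell-1}{a-1}$ is interpreted as $\ell$ when $a=1$. Then for every $\ell\ge0$ the multiset $\{z_1(\ell),\dots,z_N(\ell)\}$ coincides with the multiset of eigenvalues of $U(\ell)$. Equivalently, for every $\ell\ge1$ with $a\neq1$ and $a^\ell\neq1$, the numbers $z_n(\ell)$ are the $N$ solutions $z$ of $$\prod_{k=1}^{N}\frac{z-a^{\ell-1}z_k(1)}{z-a^{\ell}z_k(0)}=\frac{a^{\ell-1}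-1}{a^{\ell}-1}.$$
   Context: $\delta_{nm}$ is the Kronecker delta. Throughout, the data are assumed generic: for every $\ell$ the numbers $z_1(\ell),\dots,z_N(\ell)$ are pairwise distinct and all denominators appearing in the formulas above are nonzero. *)

(* Defs.v *)
From HB Require Import structures.
From mathcomp Require Import all_boot all_order all_algebra.
From mathcomp Require Import reals complex.
Set Implicit Arguments. Unset Strict Implicit. Unset Printing Implicit Defensive.
Import Order.TTheory GRing.Theory Num.Theory.
Local Open Scope ring_scope.

(* (a^l - 1)/(a - 1), interpreted as l when a = 1: the geometric sum. *)
Definition qint {C : ringType} (a : C) (l : nat) : C := \sum_(i < l) a ^+ i.

Definition is_root_multiset {C : fieldType} (p : {poly C}) (s : seq C) : Prop :=
  p != 0 /\ p = lead_coef p *: \prod_(x <- s) ('X - x%:P).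

Definition evol_poly {C : fieldType} (N : nat) (a : C) (z : nat -> 'I_N -> C)
  (l : nat) : {poly C} :=
  \prod_(j < N) ('X - (a ^+ 2 * z l j)%:P)
  - (1 + a)%:P * \prod_(j < N) ('X - (a * z l.+1 j)%:P).

Definition v0 {C : fieldType} (N : nat) (a : C) (z : nat -> 'I_N -> C)
  (m : 'I_N) : C :=
  (\prod_(j < N) (z 1%N j - a * z 0%N m))
  / (\prod_(j < N | j != m) (a * (z 0%N j - z 0%N m))).

Definition Umat {C : fieldType} (N : nat) (a : C) (z : nat -> 'I_N -> C)
  (l : nat) : 'M[C]_N :=
  \matrix_(n < N, m < N)
    ((n == m)%:R * z 0%N n * a ^+ l + v0 a z m * qint a l).

(* Main.v *)
Require Import Defs.
From HB Require Import structures.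
From mathcomp Require Import all_boot all_order all_algebra.
From mathcomp Require Import reals complex.
From mathcomp Require Import ring zify.
Import Order.TTheory GRing.Theory Num.Theory.
Local Open Scope ring_scope.

Module Aux.
Set Implicit Arguments. Unset Strict Implicit. Unset Printing Implicit Defensive.


Lemma rank1_det (R : idomainType) n (d : 'I_n -> R) (p : 'cV[R]_n) (w : 'rV[R]_n) :
  \prod_i d i != 0 ->
  \det (diag_mx (\row_i d i) + p *m w) =
    \prod_i d i + \sum_m w 0 m * p m 0 * \prod_(j | j != m) d j.
Proof.
move=> P0.
set P := \prod_i d i.
set A := diag_mx (\row_i d i).
set B := diag_mx (\row_i \prod_(j | j != i) d j).
have AB : A *m B = P%:M.
  apply/matrixP=> i j; rewrite mul_diag_mx !mxE.
  case: (eqVneq i j) => [->|ne]; last by rewrite !mulr0n mulr0.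
  by rewrite !mulr1n /P [RHS](bigD1 j).
set M1 : 'M[R]_(1 + n) := block_mx 1%:M w (- p) A.
have E1 : M1 = block_mx 1%:M 0 (- p) 1%:M *m block_mx 1%:M w 0 (A + p *m w).
  by rewrite mulmx_block !mul1mx !mul0mx !addr0 !mulmx1 mulNmx addrC addrK.
have dM1 : \det M1 = \det (A + p *m w).
  by rewrite E1 det_mulmx det_lblock det_ublock !det1 !mul1r.
set F : 'M[R]_(1 + n) := block_mx P%:M 0 (B *m p) 1%:M.
have E2 : M1 *m F = block_mx (P%:M + w *m B *m p) w 0 A.
  rewrite mulmx_block !mul1mx !mulmx0 !mulmx1 !add0r !mulmxA AB mul_scalar_mx mul_mx_scalar scalerN addNr.
  by [].
have := congr1 determinant E2.
rewrite det_mulmx det_lblock det_ublock det1 mulr1 det_scalar1 det_mx11 dM1.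
rewrite /A det_diag -/A.
have -> : \prod_i (\row_i d i) 0 i = P by apply: eq_bigr => i _; rewrite mxE.
move/(mulIf P0) => ->.
rewrite !mxE eqxx mulr1n; congr (_ + _).
apply: eq_bigr => m _; rewrite mul_mx_diag !mxE mulrAC.
by []. Qed.




Section Main.
Variables (C : fieldType) (N : nat) (a : C) (z : nat -> 'I_N -> C).

Definition Tp (c q : C) : {poly C} :=
  \prod_i ('X - (c * z 0 i)%:P)
  - q%:P * \sum_m (v0 a z m)%:P * \prod_(j | j != m) ('X - (c * z 0 j)%:P).

Lemma charU l : char_poly (Umat a z l) = Tp (a ^+ l) (qint a l).
Proof.
rewrite /char_poly.
have -> : char_poly_mx (Umat a z l) =
   diag_mx (\row_i ('X - (a ^+ l * z 0 i)%:P)) +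
   const_mx 1 *m \row_m (- (v0 a z m * qint a l)%:P).
  apply/matrixP=> i j; rewrite !mxE big_ord1 !mxE mul1r.
  case: (eqVneq i j) => [->|ne]; rewrite ?mulr1n ?mulr0n ?mul1r ?mul0r ?add0r.
    by rewrite polyCD polyCM; ring.
  by [].
rewrite rank1_det; last first.
  by apply/prodf_neq0 => i _; rewrite polyXsubC_eq0.
rewrite /Tp.
rewrite big_distrr -sumrN; congr (_ + _); apply: eq_bigr => m _.
rewrite !mxE mulr1.
rewrite /= polyCM; ring.
Qed.

Lemma comp_XsubC (b w : C) : b != 0 ->
  ('X - w%:P) \Po (b^-1 *: 'X) = b^-1 *: ('X - (b * w)%:P).
Proof.
move=> b0; rewrite comp_polyB comp_polyX comp_polyC scalerBr -!mul_polyC -polyCM.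
by rewrite mulrA mulVf // mul1r.
Qed.

Lemma comp_prod (I : finType) (P : pred I) (w : I -> C) (b : C) : b != 0 ->
  (\prod_(i | P i) ('X - (w i)%:P)) \Po (b^-1 *: 'X)
  = b^-1 ^+ #|P| *: \prod_(i | P i) ('X - (b * w i)%:P).
Proof.
move=> b0; rewrite rmorph_prod /= -scaler_prodl.
by apply: eq_bigr => i _; rewrite comp_XsubC.
Qed.

Lemma comp_sum (I : finType) (F : I -> {poly C}) r :
  (\sum_i F i) \Po r = \sum_i (F i \Po r).
Proof. exact: (big_morph _ (fun p q => comp_polyD p q r) (comp_poly0 r)). Qed.

Lemma Tp_comp (c q b : C) : b != 0 -> (0 < N)%N ->
  Tp c q \Po (b^-1 *: 'X) = b^-1 ^+ N *: Tp (b * c) (b * q).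
Proof.
move=> b0 N0; rewrite /Tp comp_polyB comp_polyM comp_polyC comp_sum.
rewrite (comp_prod _ _ b0) cardT size_enum_ord.
rewrite [X in q%:P * X](eq_bigr (fun m => (v0 a z m)%:P * (b^-1 ^+ N.-1 *:
   \prod_(j | j != m) ('X - (b * c * z 0 j)%:P)))); last first.
  move=> m _; rewrite comp_polyM comp_polyC (comp_prod _ _ b0) cardC1 card_ord.
  by under eq_bigr do rewrite mulrA.
rewrite scalerBr; congr (_ - _); first by under eq_bigr do rewrite mulrA.
set e := b^-1; have eN : e ^+ N = e ^+ N.-1 * e by rewrite -exprSr prednK.
rewrite (eq_bigr (fun m => e ^+ N.-1 *: ((v0 a z m)%:P *
   \prod_(j | j != m) ('X - (b * c * z 0 j)%:P)))); last by move=> m _; rewrite scalerAr.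
rewrite -scaler_sumr eN -scalerA -!scalerAr; congr (_ *: _).
by rewrite scalerAl -mul_polyC -polyCM mulrA mulVf // mul1r.
Qed.
End Main.





Section Aux.
Variables (C : fieldType).

Lemma size_prodX (I : finType) (P : pred I) (w : I -> C) :
  size (\prod_(i | P i) ('X - (w i)%:P)) = #|P|.+1.
Proof.
rewrite size_prod; last by move=> i _; rewrite polyXsubC_eq0.
under eq_bigr do rewrite size_XsubC.
rewrite sum_nat_const; lia.
Qed.

Lemma coef_prodX (I : finType) (P : pred I) (w : I -> C) j :
  (#|P| <= j)%N ->
  (\prod_(i | P i) ('X - (w i)%:P))`_j = (j == #|P|)%:R.
Proof.
move=> Pj; case: eqVneq => [->|ne].
  by have := lead_coef_prod_XsubC (index_enum I) P w; rewrite lead_coefE size_prodX.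
by rewrite nth_default // size_prodX; lia.
Qed.

Lemma qintS (a : C) l : qint a l.+1 = 1 + a * qint a l.
Proof.
rewrite /qint big_ord_recl expr0 big_distrr; congr (_ + _).
by apply: eq_bigr => i _; rewrite exprS.
Qed.
End Aux.





Section Main2.
Variables (C : fieldType) (N : nat) (a : C) (z : nat -> 'I_N -> C).
Hypothesis N0 : (0 < N)%N.
Hypothesis a0 : a != 0.

Lemma scale_step l c q b : b != 0 ->
  \prod_i ('X - (z l i)%:P) = Tp a z c q ->
  \prod_i ('X - (b * z l i)%:P) = Tp a z (b * c) (b * q).
Proof.
move=> b0 H; have := congr1 (comp_poly (b^-1 *: 'X)) H.
rewrite (comp_prod _ _ b0) (Tp_comp _ _ _ _ b0 N0) cardT size_enum_ord.
by apply: scalerI; rewrite expf_neq0 // invr_eq0.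
Qed.

Lemma evolE l : is_root_multiset (evol_poly a z l) [seq z l.+2 j | j : 'I_N] ->
  evol_poly a z l = (- a) *: \prod_i ('X - (z l.+2 i)%:P).
Proof.
case=> _ H.
have HQ : \prod_(x <- [seq z l.+2 j | j : 'I_N]) ('X - x%:P) = \prod_i ('X - (z l.+2 i)%:P).
  by rewrite big_map big_enum.
rewrite HQ in H; rewrite {1}H; congr (_ *: _).
have := congr1 (fun p : {poly C} => p`_N) H.
rewrite coefZ.
have cN : forall w : 'I_N -> C, (\prod_i ('X - (w i)%:P))`_N = 1.
  by move=> w; rewrite coef_prodX cardT size_enum_ord ?eqxx.
rewrite cN mulr1 => <-.
rewrite /evol_poly coefB coefCM !cN; ring.
Qed.

Lemma prodN (I : finType) (P : pred I) (F : I -> C) :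
  \prod_(i | P i) - F i = (-1) ^+ #|P| * \prod_(i | P i) F i.
Proof. exact: prodrN. Qed.

Lemma cardC1' (k : 'I_N) : #|(fun j : 'I_N => j != k)| = N.-1.
Proof. by have := cardC1 k; rewrite card_ord. Qed.

Hypothesis hd : forall j k : 'I_N, j != k -> z 0 j != z 0 k.

Lemma base1 : \prod_i ('X - (z 1 i)%:P) = Tp a z a 1.
Proof.
apply/eqP; rewrite -subr_eq0; apply/eqP.
set D := _ - _.
case: (eqVneq D 0) => // Dn0; exfalso.
have sD : (size D <= N)%N.
  apply/leq_sizeP => j Nj.
  rewrite /D /Tp !coefB coefCM coef_sum !coef_prodX ?cardT ?size_enum_ord //.
  rewrite big1 ?mulr0 ?subr0 ?subrr // => m _.
  rewrite coefCM coef_prodX cardC1 card_ord; last by lia.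
  have -> : (j == N.-1) = false by apply/eqP; lia.
  by rewrite mulr0.
set rs := [seq a * z 0 k | k : 'I_N].
have urs : uniq rs.
  rewrite map_inj_uniq ?enum_uniq // => j k /(mulfI a0) e.
  by apply/eqP; case: eqVneq => // /hd; rewrite e eqxx.
have ars : all (root D) rs.
  apply/allP => x /mapP [k _ ->]; rewrite /root /D /Tp.
  rewrite !hornerE !horner_prod horner_sum.
  under eq_bigr do rewrite hornerXsubC.
  under [X in _ - (X - _)]eq_bigr do rewrite hornerXsubC.
  rewrite [X in _ - (_ - X)](eq_bigr (fun i => v0 a z i * \prod_(j | j != i) (a * z 0 k - a * z 0 j))); last first.
    by move=> i _; rewrite hornerM hornerC horner_prod; under eq_bigr do rewrite hornerXsubC.
  rewrite [X in _ - (X - _)](bigD1 k) //= subrr mul0r sub0r.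
  rewrite [X in _ - - X](bigD1 k) //= [X in _ - - (_ + X)]big1 ?addr0; last first.
    by move=> m mk; rewrite (bigD1 k) 1?eq_sym //= subrr mul0r mulr0.
  rewrite (eq_bigr (fun j => - (z 1 j - a * z 0 k))); last by move=> j _; rewrite opprB.
  rewrite (eq_bigr (fun j => - (a * (z 0 j - z 0 k))) (P := fun j => j != k)); last first.
    by move=> j _; rewrite mulrBr opprB.
  rewrite !prodN cardT size_enum_ord cardC1' /v0.
  set A := \prod_(j < N) _. set Dn := \prod_(j < N | j != k) _.
  have Dnz : Dn != 0.
    by apply/prodf_neq0 => j jk; rewrite mulf_neq0 // subr_eq0 hd.
  have eN : (-1) ^+ N = (-1) ^+ N.-1 * (-1) :> C by rewrite -exprSr prednK.
  rewrite [_ * Dn]mulrC mulrA divfK // eN; apply/eqP; ring.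
have := max_poly_roots Dn0 ars urs; rewrite size_map size_enum_ord => h.
by move: (leq_trans h sD); rewrite ltnn.
Qed.


Hypothesis hev : forall l,
  is_root_multiset (evol_poly a z l) [seq z l.+2 j | j : 'I_N].

Lemma allQ l : \prod_i ('X - (z l i)%:P) = Tp a z (a ^+ l) (qint a l).
Proof.
suff: \prod_i ('X - (z l i)%:P) = Tp a z (a ^+ l) (qint a l) /\
      \prod_i ('X - (z l.+1 i)%:P) = Tp a z (a ^+ l.+1) (qint a l.+1) by case.
elim: l => [|l [IH1 IH2]].
  split; last by rewrite base1 expr1 /qint big_ord1 expr0.
  rewrite /Tp expr0 /qint big_ord0 mul0r subr0; apply: eq_bigr => i _; by rewrite mul1r.
split => //.
have E := evolE (hev l).
have H1 := scale_step (expf_neq0 2 a0) IH1.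
have H2 := scale_step a0 IH2.
rewrite /evol_poly H1 H2 -exprD -exprS in E.
apply: (scalerI (_ : - a != 0)); first by rewrite oppr_eq0.
rewrite -E /Tp !qintS.
set P0 := \prod_i _. set G := \sum_m _.
rewrite -mul_polyC !(polyCD, polyCM, polyCN, polyC1, rmorphXn); ring.
Qed.
End Main2.

End Aux.

Theorem proposition2p1p1 (R : realType) (N : nat) (a : R[i])
  (z : nat -> 'I_N -> R[i]) :
  (0 < N)%N ->
  a != 0 ->
  (* genericity: the z_n(l) are pairwise distinct for every l *)
  (forall l (j k : 'I_N), j != k -> z l j != z l k) ->
  (* genericity: the denominators z - a z_j(l+1) do not vanish at the roots *)
  (forall l (j k : 'I_N), z l.+2 k != a * z l.+1 j) ->
  (* evolution rule *)
  (forall l, is_root_multiset (evol_poly a z l) [seq z l.+2 j | j : 'I_N]) ->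
  forall l : nat,
    char_poly (Umat a z l) = \prod_(n < N) ('X - (z l n)%:P).
Proof.
move=> N0 a0 hd _ hev l.
by rewrite Aux.charU (Aux.allQ N0 a0 (hd 0%N) hev l).
Qed.
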